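(* Let $a$ be a positive integer and let $L_{a,a} = \{C_{i,1} : 1 \le i \le a+1\} \cup \{C_{1,j} : 1 < j \le a+1\}$, an $L$ polyomino of size $n = 2a+1$. Then on the $n \times n$ board, $\mathrm{cp}_{\mathrm{fixed}}(L_{a,a}) = 1$.
   Context: For integers $i,j$, $C_{i,j}$ denotes the unit square cell in column $i$ and row $j$ of the integer grid (columns numbered left to right, rows numbered top to bottom). A polyomino is a finite set of cells; its size is its number of cells. For a polyomino $\mathcal{P}$ of size $n$ the board is $\mathbb{B} = \{C_{i,j} : 1 \le i,j \le n\}$. The shift of $\mathcal{P}$ by integers $(c,d)$ is $\mathcal{P}+(c,d) = \{C_{x+c,y+d} : C_{x,y} \in \mathcal{P}\}$; a fixed copy of $\mathcal{P}$ is any shift of $\mathcal{P}$ (no rotations or reflections). A set of polyominoes is a valid arrangement if each is contained in $\mathbb{B}$ and they are pairwise disjoint. A fixed packing of $\mathcal{P}$ is a set of fixed copies of $\mathcal{P}$ forming a valid arrangement such that adding any further fixed copy of $\mathcal{P}$ yields an invalid arrangement. The clumsy fixed packing number $\mathrm{cp}_{\mathrm{fixed}}(\mathcal{P})$ is the minimum number of polyominoes in a fixed packing of $\mathcal{P}$ on the $n \times n$ board. *)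

(* Defs.v *)
From Stdlib Require Import ZArith List Lia.
Import ListNotations.
Open Scope Z_scope.

(* A cell C_{i,j} is represented by the pair (i, j) : Z * Z
   (i = column, j = row). A polyomino is a finite set of cells,
   represented by a duplicate-free list of cells. *)
Definition cell := (Z * Z)%type.
Definition polyomino := list cell.

Definition in_shift (P : polyomino) (s : Z * Z) (x : cell) : Prop :=
  exists y, In y P /\ x = (fst y + fst s, snd y + snd s).

Definition in_board (n : Z) (x : cell) : Prop :=
  1 <= fst x <= n /\ 1 <= snd x <= n.

Definition copy_in_board (n : Z) (P : polyomino) (s : Z * Z) : Prop :=
  forall x, in_shift P s x -> in_board n x.

Definition copies_disjoint (P : polyomino) (s t : Z * Z) : Prop :=
  forall x, in_shift P s x -> ~ in_shift P t x.

Definition valid_arrangement (n : Z) (P : polyomino) (S : list (Z * Z)) : Prop :=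
  NoDup S /\
  (forall s, In s S -> copy_in_board n P s) /\
  (forall i j, (i < j)%nat -> (j < length S)%nat ->
     copies_disjoint P (nth i S (0,0)) (nth j S (0,0))).

Definition fixed_packing (n : Z) (P : polyomino) (S : list (Z * Z)) : Prop :=
  valid_arrangement n P S /\
  forall t, ~ In t S -> ~ valid_arrangement n P (t :: S).

Definition is_cp_fixed (P : polyomino) (k : nat) : Prop :=
  let n := Z.of_nat (length P) in
  (exists S, fixed_packing n P S /\ length S = k) /\
  (forall S, fixed_packing n P S -> (k <= length S)%nat).

(* L_{a,a} = {C_{i,1} : 1 <= i <= a+1} U {C_{1,j} : 1 < j <= a+1} *)
Definition L_poly (a : nat) : polyomino :=
  map (fun i => (Z.of_nat i + 1, 1)) (seq 0 (a + 1)) ++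
  map (fun j => (1, Z.of_nat j + 2)) (seq 0 a).

(* Main.v *)
Require Import Defs.
From Stdlib Require Import ZArith List Lia.
Import ListNotations.
Open Scope Z_scope.

Lemma L_len a : length (L_poly a) = (2 * a + 1)%nat.
Proof. unfold L_poly. rewrite length_app, !length_map, !length_seq. lia. Qed.

Lemma L_mem a y : In y (L_poly a) ->
  (1 <= fst y <= Z.of_nat a + 1 /\ snd y = 1) \/ (fst y = 1 /\ 2 <= snd y <= Z.of_nat a + 1).
Proof.
  unfold L_poly. rewrite in_app_iff, !in_map_iff.
  intros [[i [<- Hi]]|[j [<- Hj]]]; apply in_seq in Hi || apply in_seq in Hj; simpl; lia.
Qed.

Lemma L_row a x : 1 <= x <= Z.of_nat a + 1 -> In (x, 1) (L_poly a).
Proof.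
  intros H. unfold L_poly. apply in_app_iff. left. apply in_map_iff.
  exists (Z.to_nat (x - 1)). split. cbn [fst snd]; f_equal; lia. apply in_seq; lia.
Qed.

Lemma L_col a y : 1 <= y <= Z.of_nat a + 1 -> In (1, y) (L_poly a).
Proof.
  intros H. destruct (Z.eq_dec y 1) as [->|Hne]. apply L_row; lia.
  unfold L_poly. apply in_app_iff. right. apply in_map_iff.
  exists (Z.to_nat (y - 2)). split. cbn [fst snd]; f_equal; lia. apply in_seq; lia.
Qed.

Lemma n_eq a : Z.of_nat (length (L_poly a)) = 2 * Z.of_nat a + 1.
Proof. rewrite L_len. lia. Qed.

Lemma valid_single a c d : 0 <= c <= Z.of_nat a -> 0 <= d <= Z.of_nat a ->
  valid_arrangement (Z.of_nat (length (L_poly a))) (L_poly a) [(c,d)].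
Proof.
  intros Hc Hd. rewrite n_eq. split; [|split].
  - constructor. easy. constructor.
  - intros s [<-|[]] x [y [Hy ->]]. apply L_mem in Hy. destruct y as [y1 y2]. unfold in_board; cbn [fst snd] in *. lia.
  - intros i j Hij Hj. simpl in Hj. lia.
Qed.

Lemma bounds a c d : (0 < a)%nat ->
  copy_in_board (Z.of_nat (length (L_poly a))) (L_poly a) (c,d) ->
  0 <= c <= Z.of_nat a /\ 0 <= d <= Z.of_nat a.
Proof.
  intros ha H. rewrite n_eq in H.
  assert (H1 := H (Z.of_nat a + 1 + c, 1 + d)).
  assert (H2 := H (1 + c, Z.of_nat a + 1 + d)).
  unfold in_board in *; cbn [fst snd] in *.
  assert (A1 : in_shift (L_poly a) (c,d) (Z.of_nat a + 1 + c, 1 + d)).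
  { exists (Z.of_nat a + 1, 1). split. apply L_row; lia. reflexivity. }
  assert (A2 : in_shift (L_poly a) (c,d) (1 + c, Z.of_nat a + 1 + d)).
  { exists (1, Z.of_nat a + 1). split. apply L_col; lia. reflexivity. }
  specialize (H1 A1). specialize (H2 A2). lia.
Qed.

Theorem theorem3 (a : nat) (ha : (0 < a)%nat) :
  length (L_poly a) = (2 * a + 1)%nat /\ is_cp_fixed (L_poly a) 1.
Proof.
  split. apply L_len.
  unfold is_cp_fixed. split.
  - exists [(0, Z.of_nat a)]. split; [|reflexivity]. split.
    + apply valid_single; lia.
    + intros [c d] Hn [_ [Hb Hdis]].
      destruct (bounds a c d ha (Hb _ (or_introl eq_refl))) as [Hc Hd].
      specialize (Hdis 0%nat 1%nat ltac:(lia) ltac:(simpl; lia)). simpl in Hdis.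
      apply (Hdis (1 + c, Z.of_nat a + 1)).
      * exists (1, Z.of_nat a + 1 - d). split. apply L_col; lia. cbn [fst snd]; f_equal; lia.
      * exists (1 + c, 1). split. apply L_row; lia. cbn [fst snd]; f_equal; lia.
  - intros S [HS Hmax]. destruct S as [|s S]; simpl; [|lia].
    exfalso. apply (Hmax (0,0) (fun h => h)). apply valid_single; lia.
Qed.
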